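(* Let $\sigma$ be a nonnegative finite measure on $\mathbb{R}^2$ which is upper $\alpha$-Ahlfors regular for some $\alpha>1$ and constants $M,r_*>0$, with $\sigma(\mathbb{R}^2)=\Phi\le Mr_*^\alpha$. Then $$\|\sigma\|^2_{H^{-1/2}(\mathbb{R}^2)}\lesssim_\alpha M^{1/\alpha}\Phi^{2-1/\alpha}.$$
   Context: For $\alpha\in[0,2]$, a nonnegative finite measure $\sigma$ on $\mathbb{R}^2$ is upper $\alpha$-Ahlfors regular with constants $M,r_*>0$ if $\sigma(B(x,r))\le Mr^\alpha$ for all $x\in\operatorname{supp}\sigma$ and all $r\in(0,r_*]$. $\|\sigma\|^2_{H^{-1/2}(\mathbb{R}^2)}=\int\int|x-y|^{-1}d\sigma(x)d\sigma(y)$. $A\lesssim_\alpha B$ means $A\le CB$ with $C$ depending only on $\alpha$. *)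

(* Defs.v *)
From mathcomp Require Import all_boot all_algebra all_classical all_reals all_analysis.
Import GRing.Theory Num.Theory.
Local Open Scope classical_set_scope.
Local Open Scope ring_scope.

(* The plane R^2 is modelled as R * R with the product of the Borel
   sigma-algebras (= the Borel sigma-algebra of R^2). *)

Definition edist {R : realType} (x y : R * R) : R :=
  Num.sqrt ((x.1 - y.1) ^+ 2 + (x.2 - y.2) ^+ 2).

Definition eball {R : realType} (x : R * R) (r : R) : set (R * R) :=
  [set y | edist x y < r].

Definition msupp {R : realType} (sigma : set (R * R) -> \bar R) : set (R * R) :=
  [set x | forall r : R, 0 < r -> (0 < sigma (eball x r))%E].

Definition upper_ahlfors_regular {R : realType}
  (sigma : set (R * R) -> \bar R) (alpha M rstar : R) : Prop :=
  forall x, msupp sigma x ->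
  forall r : R, 0 < r -> r <= rstar ->
    (sigma (eball x r) <= (M * r `^ alpha)%:E)%E.

Definition riesz1 {R : realType} (x y : R * R) : \bar R :=
  if x == y then +oo%E else ((edist x y)^-1)%:E.

(* ||sigma||^2_{H^{-1/2}} = \int\int |x-y|^{-1} dsigma(x) dsigma(y) *)
Definition hmhalf_energy {R : realType}
  (sigma : {measure set (R * R)%type -> \bar R}) : \bar R :=
  (\int[sigma]_x \int[sigma]_y riesz1 x y)%E.

(* Main.v *)
From Pilot Require Import Defs.
From mathcomp Require Import all_boot all_algebra all_classical all_reals all_analysis.
Import GRing.Theory Num.Theory.
Local Open Scope classical_set_scope.
Local Open Scope ring_scope.

From mathcomp Require Import ring lra order measurable_realfun.
Import Order.TTheory.
Local Notation edist := Pilot.Defs.edist.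
Local Notation eball := Pilot.Defs.eball.



Section Geo.
Context {R : realType}.
Implicit Types x y : R * R.

Definition d2 x y : R := (x.1 - y.1) ^+ 2 + (x.2 - y.2) ^+ 2.

Lemma d2_ge0 x y : 0 <= d2 x y.
Proof. by rewrite /d2 addr_ge0 // sqr_ge0. Qed.

Lemma edist_lt x y (s : R) : 0 < s -> (edist x y < s) = (d2 x y < s ^+ 2).
Proof.
move=> s0; rewrite /edist -/(d2 x y).
by rewrite -{1}(ger0_norm (ltW s0)) -sqrtr_sqr ltr_sqrt // exprn_gt0.
Qed.

Lemma edist_ge0 x y : 0 <= edist x y.
Proof. exact: sqrtr_ge0. Qed.

Lemma sqr_gt0' (a : R) : a != 0 -> 0 < a ^+ 2.
Proof. by move=> a0; rewrite lt_neqAle sqr_ge0 andbT eq_sym sqrf_eq0. Qed.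

Lemma edist_gt0 x y : x != y -> 0 < edist x y.
Proof.
case: x y => [a b] [c e] ne; rewrite /edist sqrtr_gt0 /=.
have [ac|ac] := eqVneq a c.
  have be : b != e by apply: contra ne => /eqP ->; rewrite ac.
  by rewrite ac subrr expr0n /= add0r sqr_gt0' // subr_eq0.
by rewrite ltr_pwDl ?sqr_ge0 // sqr_gt0' // subr_eq0.
Qed.

Lemma measurable_edist x : measurable_fun setT (edist x).
Proof.
rewrite /edist.
apply: (@measurableT_comp _ _ _ _ _ _ (@Num.sqrt R)).
  by apply: continuous_measurable_fun; exact: sqrt_continuous.
apply: measurable_funD; apply: measurable_funX; apply: measurable_funB;
  [exact: measurable_cst|exact: measurable_fst|exact: measurable_cst|exact: measurable_snd].
Qed.

Lemma measurable_eball x r : measurable (eball x r).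
Proof.
have := measurable_edist x measurableT _ (measurable_itv `]-oo, r[).
rewrite setTI; congr measurable; apply/seteqP; split => y /=;
  by rewrite in_itv /= ?andbT.
Qed.

End Geo.


Section Integ.
Context d (T : measurableType d) (R : realType).
Variable mu : {measure set T -> \bar R}.
Local Open Scope ereal_scope.

Lemma measurable_cstP (P : Prop) : measurable [set _ : T | P].
Proof.
case: (pselect P) => p.
  by have -> : [set _ : T | P] = setT by apply/seteqP; split.
by have -> : [set _ : T | P] = set0 by apply/seteqP; split.
Qed.

Lemma le_integralT (f g : T -> \bar R) : (forall x, 0 <= f x) ->
  (forall x, f x <= g x) -> \int[mu]_x f x <= \int[mu]_x g x.
Proof.
move=> f0 fg; rewrite !ge0_integralTE //; last by move=> x; exact: le_trans (f0 x) (fg x).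
apply: ereal_sup_le => _ [h hf <-]; exists h => //= x.
exact: le_trans (hf x) (fg x).
Qed.

Lemma ae_bound_integral (g : T -> \bar R) (N : set T) (K : R) :
  measurable N -> mu N = 0 -> (0 <= K)%R -> (forall x, 0 <= g x) ->
  (forall x, ~ N x -> g x <= K%:E) -> \int[mu]_x g x <= K%:E * mu setT.
Proof.
move=> mN N0 K0 g0 gK.
pose h x := if x \in N then +oo else K%:E.
have h0 x : 0 <= h x by rewrite /h; case: ifP.
have mh : measurable_fun setT h.
  move=> _ B mB; rewrite setTI.
  have -> : h @^-1` B = (N `&` [set _ | B +oo]) `|` (~` N `&` [set _ | B K%:E]).
    apply/seteqP; split => x /=; rewrite /h.
      by case: ifPn => [/set_mem|/negP]; [left|right; split => //; move/mem_set].
    by case=> -[Nx Bx]; [rewrite mem_set|rewrite memNset].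
  by apply: measurableU; apply: measurableI => //; try exact: measurableC; exact: measurable_cstP.
apply: (@le_trans _ _ (\int[mu]_x h x)).
  apply: le_integralT => // x; rewrite /h; case: ifPn => [_|/negP xN]; first exact: leey.
  by apply: gK => Nx; apply: xN; exact: mem_set.
rewrite (ge0_negligible_integral _ _ _ _ N0) //.
have -> : \int[mu]_(x in setT `\` N) h x = \int[mu]_(x in setT `\` N) (cst K%:E) x.
  by apply: eq_integral => x; rewrite inE => -[_ Nx]; rewrite /h memNset.
rewrite integral_cst; last exact: measurableD.
apply: lee_wpmul2l; first by rewrite lee_fin.
by apply: le_measure; rewrite ?inE //; exact: measurableD.
Qed.

End Integ.


Section Supp.
Context {R : realType}.

Lemma sq_bound (u v e : R) : 0 < e -> u - e < v -> v < u + e -> (u - v) ^+ 2 < e ^+ 2.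
Proof. move=> e0 h1 h2; nra. Qed.

Lemma sq_tri (u v w : R) : (u - w) ^+ 2 <= 2 * (u - v) ^+ 2 + 2 * (v - w) ^+ 2.
Proof.
rewrite -subr_ge0.
have -> : 2 * (u - v) ^+ 2 + 2 * (v - w) ^+ 2 - (u - w) ^+ 2 = (u - 2 * v + w) ^+ 2 by ring.
exact: sqr_ge0.
Qed.

Lemma arith1 (p1 p2 q1 q2 s1 s2 cc r : R) : cc < (r / 2) ^+ 2 ->
  p2 <= 2 * q2 + 2 * s2 -> p1 <= 2 * q1 + 2 * s1 -> q2 < (r / 8) ^+ 2 ->
  q1 < (r / 8) ^+ 2 -> s1 + s2 < cc -> p1 + p2 < r ^+ 2.
Proof.
rewrite !expr_div_n; have := sqr_ge0 r; move: (r ^+ 2) => rr.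
have -> : (2 : R) ^+ 2 = 4 by rewrite expr2; lra.
have -> : (8 : R) ^+ 2 = 64 by rewrite expr2; lra.
lra.
Qed.

Lemma arith2 (x1 a x2 b cc r : R) : (r / 4) ^+ 2 < cc ->
  (x2 - b) ^+ 2 < (r / 8) ^+ 2 -> (x1 - a) ^+ 2 < (r / 8) ^+ 2 ->
  (a - x1) ^+ 2 + (b - x2) ^+ 2 < cc.
Proof.
rewrite -(opprB x1) -(opprB x2) !sqrrN.
move: ((x1 - a) ^+ 2) ((x2 - b) ^+ 2) => q1 q2.
rewrite !expr_div_n; have := sqr_ge0 r; move: (r ^+ 2) => rr.
have -> : (4 : R) ^+ 2 = 16 by rewrite expr2; lra.
have -> : (8 : R) ^+ 2 = 64 by rewrite expr2; lra.
lra.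
Qed.

Lemma supp_ae (sigma : {measure set (R * R)%type -> \bar R}) :
  exists N, measurable N /\ sigma N = 0%E /\ forall x, ~ N x -> msupp sigma x.
Proof.
pose B (q : (rat * rat * rat)%type) : set (R * R)%type :=
  eball (ratr q.1.1, ratr q.1.2) (ratr q.2).
pose A (n : nat) : set (R * R)%type := match @unpickle (rat * rat * rat)%type n with
  | Some q => if sigma (B q) == 0%E then B q else set0 | None => set0 end.
have mA n : measurable (A n).
  rewrite /A; case: unpickle => [q|]; last exact: measurable0.
  by case: ifP => _; [exact: measurable_eball|exact: measurable0].
have A0 n : sigma (A n) = 0%E.
  rewrite /A; case: unpickle => [q|]; last exact: measure0.
  by case: ifP => [/eqP //|_]; exact: measure0.
exists (\bigcup_n A n); split; first exact: bigcupT_measurable.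
split.
  apply/eqP; rewrite eq_le measure_ge0 andbT.
  apply: le_trans (generalized_Boole_inequality _ mA (bigcupT_measurable _ mA)) _.
  by rewrite eseries0.
move=> [x1 x2] Nx r r0; rewrite lt_neqAle measure_ge0 andbT; apply/negP => /eqP H0.
have r8 : 0 < r / 8 by rewrite divr_gt0.
have h1 : x1 - r / 8 < x1 + r / 8 by lra.
have h2 : x2 - r / 8 < x2 + r / 8 by lra.
have h3 : r / 4 < r / 2 by lra.
have [a /[!in_itv] /= /andP[a1 a2]] := rat_in_itvoo h1.
have [b /[!in_itv] /= /andP[b1 b2]] := rat_in_itvoo h2.
have [c /[!in_itv] /= /andP[c1 c2]] := rat_in_itvoo h3.
have c0 : 0 < ratr c :> R by lra.
have sub : B (a, b, c) `<=` eball (x1, x2) r.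
  move=> [y1 y2]; rewrite /B /eball /= !edist_lt // /d2 /=.
  have := sq_bound _ _ _ r8 a1 a2; have := sq_bound _ _ _ r8 b1 b2.
  have := sq_tri x1 (ratr a) y1; have := sq_tri x2 (ratr b) y2.
  have : ratr c ^+ 2 < (r / 2) ^+ 2 :> R.
    by rewrite ltr_pXn2r // ?nnegrE; lra.
  exact: arith1.
have Bx : B (a, b, c) (x1, x2).
  rewrite /B /eball /= edist_lt // /d2 /=.
  have := sq_bound _ _ _ r8 a1 a2; have := sq_bound _ _ _ r8 b1 b2.
  have : (r / 4) ^+ 2 < ratr c ^+ 2 :> R.
    by rewrite ltr_pXn2r // ?nnegrE; lra.
  exact: arith2.
have z : sigma (B (a, b, c)) == 0%E.
  rewrite eq_le measure_ge0 andbT H0; apply: le_measure sub.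
    by rewrite inE; exact: measurable_eball.
  by rewrite inE; exact: measurable_eball.
apply: Nx; exists (pickle (a, b, c)); first exact: I.
by rewrite /A pickleK z.
Qed.

End Supp.


Section Pointwise.
Context {R : realType}.
Implicit Types x y : R * R.

Lemma ind_ge0 (A : set (R * R)) y : 0 <= \1_A y :> R.
Proof. by rewrite /indic; case: (y \in A). Qed.

Lemma edist_xx x : edist x x = 0.
Proof. by rewrite /edist !subrr expr0n /= addr0 sqrtr0. Qed.

Definition term x (rho : R) (k : nat) (y : R * R) : \bar R :=
  ((2 ^+ k.+1 / rho) * \1_(eball x (rho / 2 ^+ k)) y)%:E.

Definition Fser x rho y : \bar R := (\sum_(k <oo) term x rho k y)%E.

Lemma term_ge0 x rho k y : 0 < rho -> (0 <= term x rho k y)%E.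
Proof.
move=> r0; rewrite /term lee_fin mulr_ge0 // ?ind_ge0 //.
by rewrite divr_ge0 // ?exprn_ge0 // ltW.
Qed.

Lemma Fser_ge0 x rho y : 0 < rho -> (0 <= Fser x rho y)%E.
Proof. by move=> r0; apply: nneseries_ge0 => k _ _; exact: term_ge0. Qed.

Lemma Fser_ge_term x rho y k : 0 < rho -> (term x rho k y <= Fser x rho y)%E.
Proof.
move=> r0; apply: le_trans (nneseries_lim_ge k.+1 _); last first.
  by move=> n _ _; exact: term_ge0.
rewrite big_nat_recr //= leeDr // sume_ge0 // => i _; exact: term_ge0.
Qed.

Lemma Fser_diag x rho : 0 < rho -> Fser x rho x = +oo%E.
Proof.
move=> r0; apply: eq_infty => r.
have [n rn] : exists n : nat, r * rho < n%:R.
  by exists (Num.Def.trunc (r * rho)).+1; exact: truncnS_gt.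
apply: le_trans (nneseries_lim_ge n _); last by move=> k _ _; exact: term_ge0.
apply: (@le_trans _ _ (\sum_(0 <= i < n) (rho^-1)%:E)%E).
  rewrite sumEFin lee_fin sumr_const_nat subn0.
  rewrite -mulr_natl ler_pdivlMr //; lra.
apply: lee_sum => k _; rewrite /term lee_fin.
have -> : \1_(eball x (rho / 2 ^+ k)) x = 1 :> R.
  rewrite /indic mem_set // /eball /= edist_xx.
  by rewrite divr_gt0 // exprn_gt0.
rewrite mulr1 -[X in (X <= _)%R]mul1r ler_pM2r ?invr_gt0 //.
by rewrite exprn_ege1 // ler1n.
Qed.

Lemma riesz_le x y rho : 0 < rho ->
  (riesz1 x y <= (rho^-1)%:E + Fser x rho y)%E.
Proof.
move=> r0; rewrite /riesz1; have [<-|xy] := eqVneq x y.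
  by rewrite Fser_diag // addey.
have d0 := edist_gt0 _ _ xy; set d := edist x y in d0 *.
have [rd|dr] := leP rho d.
  apply: le_trans _ (leeDl _ (Fser_ge0 x _ y r0)).
  by rewrite lee_fin lef_pV2 ?posrE.
have exP : exists n, rho / 2 ^+ n <= d.
  exists (Num.Def.trunc (rho / d)).+1.
  rewrite ler_pdivrMr ?exprn_gt0 // -ler_pdivrMl //.
  apply: (le_trans (ltW (truncnS_gt _))).
  rewrite -natrX ler_nat [d^-1 * rho]mulrC; apply: (ltn_trans (ltnSn _)); exact: ltn_expl.
case: (ex_minnP exP) => m hm hmin.
have m0 : m != 0%N.
  by apply/eqP => m0; move: hm; rewrite m0 expr0 divr1 leNgt dr.
have hk : d < rho / 2 ^+ m.-1.
  rewrite ltNge; apply/negP => /hmin; rewrite leqNgt; apply/negP.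
  by rewrite negbK prednK ?lt0n // ltnSn.
have Hr : (0 <= (rho^-1)%:E)%E by rewrite lee_fin invr_ge0 ltW.
apply: le_trans _ (leeDr _ Hr); apply: le_trans _ (Fser_ge_term x _ y m.-1 r0).
rewrite /term lee_fin.
have -> : \1_(eball x (rho / 2 ^+ m.-1)) y = 1 :> R by rewrite /indic mem_set.
rewrite mulr1 prednK ?lt0n // -invf_div lef_pV2 ?posrE // divr_gt0 // exprn_gt0 //.
Qed.

End Pointwise.


Section Inner.
Context {R : realType}.

Lemma riesz1_ge0 (x y : R * R) : (0 <= riesz1 x y)%E.
Proof.
rewrite /riesz1; case: ifP => _; first exact: leey.
by rewrite lee_fin invr_ge0 edist_ge0.
Qed.

Lemma inner_bound (sigma : {measure set (R * R)%type -> \bar R}) (alpha M rstar rho : R) x :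
  0 < rho -> rho <= rstar -> upper_ahlfors_regular sigma alpha M rstar -> msupp sigma x ->
  (\int[sigma]_y riesz1 x y <= (rho^-1)%:E * sigma setT +
     \sum_(k <oo) ((2 ^+ k.+1 / rho) * (M * (rho / 2 ^+ k) `^ alpha))%:E)%E.
Proof.
move=> r0 rr UA sx.
have := @le_integralT _ _ _ sigma _ _ (riesz1_ge0 x) (fun y => riesz_le x y rho r0).
move=> H; apply: le_trans H _.
have mt k : measurable_fun setT (term x rho k).
  apply/measurable_EFinP; apply: measurable_funM; first exact: measurable_cst.
  apply: measurable_indic; exact: measurable_eball.
rewrite ge0_integralD //.
all: try (by move=> y _; exact: Fser_ge0).
all: try (by move=> y _; rewrite lee_fin invr_ge0 ltW).
all: try (by apply: (ge0_emeasurable_sum (P := xpredT)) => // k y _ _; exact: term_ge0).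
all: try (exact: measurable_cst).

rewrite integral_cst //; apply: leeD => //.
rewrite /Fser integral_nneseries //; last by move=> k y _; exact: term_ge0.
apply: lee_nneseries => [k _ _|k _].
  by apply: integral_ge0 => y _; exact: term_ge0.
have c0 : 0 <= 2 ^+ k.+1 / rho by rewrite divr_ge0 ?exprn_ge0 // ltW.
rewrite /term (@integralZl_indic _ _ _ sigma setT measurableT (fun _ => eball x (rho / 2 ^+ k))) //; last 2 first.
- by move=> H; move: c0; rewrite leNgt H.
- exact: measurable_eball.
rewrite integral_indic ?setIT; last exact: measurable_eball.
rewrite (EFinM (2 ^+ k.+1 / rho) (M * _)); apply: lee_wpmul2l; first by rewrite lee_fin.
apply: UA => //; first by rewrite divr_gt0 // exprn_gt0.
apply: le_trans rr; rewrite ler_pdivrMr ?exprn_gt0 //.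
all: first [exact: measurableT | by rewrite ler_peMr ?(ltW r0) // exprn_ege1 // ler1n].
Qed.

End Inner.


Section Series.
Context {R : realType}.

Lemma q_bounds (alpha : R) : 1 < alpha ->
  0 < 2 `^ (1 - alpha) /\ 2 `^ (1 - alpha) < 1.
Proof.
move=> a1; split; first by rewrite powR_gt0.
rewrite /powR ifF; last by rewrite pnatr_eq0.
rewrite expR_lt1 pmulr_llt0 ?ln_gt0 ?ltr1n //; lra.
Qed.

Lemma term_eq (alpha M rho : R) (k : nat) : 0 < rho ->
  (2 ^+ k.+1 / rho) * (M * (rho / 2 ^+ k) `^ alpha) =
  (2 * M * rho `^ alpha / rho) * (2 `^ (1 - alpha)) ^+ k.
Proof.
move=> r0.
have h1 : (rho / 2 ^+ k) `^ alpha = rho `^ alpha * 2 `^ (- (k%:R * alpha)).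
  rewrite powRM ?invr_ge0 ?exprn_ge0 ?ltW //.
  by rewrite -powR_invn // -powRrM mulNr.
have h2 : (2 `^ (1 - alpha)) ^+ k = 2 `^ (k%:R - k%:R * alpha) :> R.
  rewrite -powR_mulrn ?powR_ge0 // -powRrM; congr (_ `^ _); ring.
have h3 : 2 `^ (k%:R - k%:R * alpha) = 2 `^ k%:R * 2 `^ (- (k%:R * alpha)) :> R.
  by rewrite powRD // pnatr_eq0 implybT.
rewrite h1 h2 h3 powR_mulrn // exprS; ring.
Qed.

Lemma series_bound (alpha M rho : R) : 1 < alpha -> 0 < M -> 0 < rho ->
  (\sum_(k <oo) ((2 ^+ k.+1 / rho) * (M * (rho / 2 ^+ k) `^ alpha))%:E <=
   (2 * M * rho `^ alpha / rho / (1 - 2 `^ (1 - alpha)))%:E)%E.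
Proof.
move=> a1 M0 r0; have [q0 q1] := q_bounds _ a1.
have a0 : 0 <= 2 * M * rho `^ alpha / rho.
  by rewrite divr_ge0 ?(ltW r0) // mulr_ge0 ?powR_ge0 // mulr_ge0 // ltW.
apply: lime_le.
  apply: is_cvg_nneseries => n _ _; rewrite lee_fin term_eq //.
  by rewrite mulr_ge0 // exprn_ge0 // ltW.
apply: nearW => n; rewrite sumEFin lee_fin.
under eq_bigr do rewrite term_eq //.
have := geometric_le_lim n a0 q0 (_ : `|2 `^ (1 - alpha)| < 1).
by rewrite /series /geometric /=; apply; rewrite ger0_norm // ltW.
Qed.

End Series.


Lemma powRVn {R : realType} (a r : R) : 0 < a -> (a^-1) `^ r = (a `^ r)^-1.
Proof.
move=> a0; have ai : 0 <= a^-1 by rewrite invr_ge0 ltW.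
have := @powRM R (a^-1) a r ai (ltW a0).
rewrite mulVf ?gt_eqF // powR1 => h.
have B0 : a `^ r != 0 by rewrite gt_eqF // powR_gt0.
by rewrite -[LHS]mulr1 -(divff B0) mulrA -h mul1r.
Qed.

Theorem proposition4p7 :
  forall (R : realType) (alpha : R), 1 < alpha -> alpha <= 2 ->
  exists C : R, 0 < C /\
  forall (sigma : {finite_measure set (R * R)%type -> \bar R}) (M rstar Phi : R),
    0 < M -> 0 < rstar ->
    upper_ahlfors_regular sigma alpha M rstar ->
    sigma setT = Phi%:E ->
    Phi <= M * rstar `^ alpha ->
    (hmhalf_energy sigma <= (C * M `^ (alpha^-1) * Phi `^ (2 - alpha^-1))%:E)%E.
Proof.
move=> R alpha a1 a2.
have [q0 q1] := q_bounds _ a1; set q := 2 `^ (1 - alpha) in q0 q1 *.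
have q1' : 0 < 1 - q by lra.
exists (1 + 2 / (1 - q)); split.
  by apply: ltr_wpDr; [rewrite divr_ge0 // ltW|].
move=> sigma M rstar Phi M0 r0 UA sT Phb.
have Phi0 : 0 <= Phi by rewrite -lee_fin -sT measure_ge0.
set C := 1 + 2 / (1 - q).
have C0 : 0 <= C by rewrite addr_ge0 // divr_ge0 // ltW.
have RHS0 : 0 <= C * M `^ alpha^-1 * Phi `^ (2 - alpha^-1).
  by rewrite mulr_ge0 ?powR_ge0 // mulr_ge0 ?powR_ge0.
have g0 x : (0 <= \int[sigma]_y riesz1 x y)%E.
  by apply: integral_ge0 => y _; exact: riesz1_ge0.
rewrite /hmhalf_energy.
have [N [mN [N0 HN]]] := supp_ae sigma.
have [Pz|Pp] : Phi = 0 \/ 0 < Phi.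
  by move: Phi0; rewrite le_eqVlt => /orP[/eqP <-|]; [left|right].
  have S0 : sigma setT = 0%E by rewrite sT Pz.
  apply: le_trans (@ae_bound_integral _ _ _ sigma _ setT 0 measurableT S0 (lexx 0) g0 _) _.
    by move=> x [].
  by rewrite mul0e lee_fin.
have a0 : alpha != 0 by rewrite gt_eqF //; lra.
have s0 : 0 <= alpha^-1 by rewrite invr_ge0; lra.
set a := M `^ alpha^-1; set b := Phi `^ alpha^-1.
have apos : 0 < a by rewrite powR_gt0.
have bpos : 0 < b by rewrite powR_gt0.
have hb : b `^ alpha = Phi by rewrite -powRrM mulVf // powRr1 // ltW.
have ha : a `^ alpha = M by rewrite -powRrM mulVf // powRr1 // ltW.
set rho := b / a.
have rpos : 0 < rho by rewrite divr_gt0.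
have hrho : rho `^ alpha = Phi / M.
  by rewrite powRM ?invr_ge0 ?ltW // powRVn // hb ha.
have rle : rho <= rstar.
  rewrite ler_pdivrMr //.
  have : b <= (M * rstar `^ alpha) `^ alpha^-1.
    apply: (ge0_ler_powR s0 _ _ Phb); rewrite nnegrE; first exact: ltW.
    by rewrite mulr_ge0 ?powR_ge0 // ltW.
  rewrite (powRM _ (ltW M0) (powR_ge0 _ _)) -powRrM mulfV // powRr1 ?(ltW r0) // -/a.
  by rewrite mulrC.
set K := rho^-1 * Phi + 2 * M * rho `^ alpha / rho / (1 - q).
have K0 : 0 <= K.
  have M0' := ltW M0; have r0' := ltW rpos; have q0' := ltW q1'.
  by rewrite addr_ge0 // ?mulr_ge0 ?invr_ge0 // powR_ge0.
have sT2 : (sigma : {measure set (R * R)%type -> \bar R}) setT = Phi%:E := sT.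
have H := (@ae_bound_integral _ _ _ sigma _ N K mN N0 K0 g0).
apply: le_trans; first apply: H.
  move=> x /HN sx.
  apply: le_trans (@inner_bound R sigma alpha M rstar rho x rpos rle UA sx) _.
  rewrite sT2 /K EFinD -EFinM; apply: leeD => //.
  exact: series_bound.
rewrite ?sT ?sT2 -EFinM lee_fin le_eqVlt; apply/orP; left; apply/eqP.
have hP : Phi `^ (2 - alpha^-1) = Phi ^+ 2 / b.
  rewrite powRB ?gt_eqF ?implybT //; last first.
    have : alpha^-1 < 1 by rewrite invf_lt1; lra.
    lra.
  by rewrite -(powR_mulrn 2 (ltW Pp)).
rewrite hP /K hrho /rho /C /a; field.
by rewrite !gt_eqF.
Qed.
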